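(* Let $\mathcal{X}\subset\mathbb{R}^d$ be bounded, $n\in\mathbb{N}$, let $\mathcal{M}_f^n$ be the set of finite Borel measures on $\mathcal{X}^n$, $\mathcal{F}^n:=\{P^*\mid P\in\mathcal{M}_f^n\}$, let $S:\mathcal{F}^n\times\mathcal{X}^n\to\mathbb{R}$ be a (strictly) consistent scoring function for $\mathrm{id}_{\mathcal{F}^n}$, let $b:[0,\infty)\times[0,\infty)\to\mathbb{R}$ be a (strictly) consistent Bregman function, and $c>0$. (i) The function $S_1:\mathcal{M}_f^n\times\mathbb{M}_0\to\mathbb{R}$, $$S_1(\mu,\{y_1,\dots,y_m\})=\sum_{x_1,\dots,x_n\in\{y_1,\dots,y_m\}}S(\mu^*,x_1,\dots,x_n)+c\,b(\mu(\mathcal{X}^n),m^n)$$ for $m\in\mathbb{N}$ and $S_1(\mu,\emptyset)=c\,b(\mu(\mathcal{X}^n),0)$, is a consistent scoring function for the $n$-th moment measure. (ii) The function $S_2:\mathcal{M}_f^n\times\mathbb{M}_0\to\mathbb{R}$, $$S_2(\alpha,\{y_1,\dots,y_m\})=\sum^{\neq}_{x_1,\dots,x_n\in\{y_1,\dots,y_m\}}S(\alpha^*,x_1,\dots,x_n)+c\,b(\alpha(\mathcal{X}^n),m^{[n]})$$ for $m\ge n$ and $S_2(\alpha,\{y_1,\dots,y_m\})=c\,b(\alpha(\mathcal{X}^n),0)$ for $m<n$, is a consistent scoring function for the $n$-th factorial moment measure. Both $S_1$ and $S_2$ are strictly consistent if $S$ and $b$ are strictly consistent.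
   Context: $\mathbb{M}_0$ is the space of finite counting measures on $\mathcal{X}$, realizations written as point sets. For a finite measure $P$, $P^*:=P/P(\text{whole space})$. For a point process $\Phi$ the $n$-th moment measure $\mu^{(n)}$ and $n$-th factorial moment measure $\alpha^{(n)}$ satisfy $\mathbb{E}\sum_{x_1,\dots,x_n\in\Phi}f(x_1,\dots,x_n)=\int f\,d\mu^{(n)}$ and $\mathbb{E}\sum^{\neq}_{x_1,\dots,x_n\in\Phi}f(x_1,\dots,x_n)=\int f\,d\alpha^{(n)}$ for positive measurable $f$, where $\sum^{\neq}$ runs over $n$-tuples of distinct points and the plain sum over all $n$-tuples. Factorial product: $m^{[n]}=m(m-1)\cdots(m-n+1)$ if $m\ge n$, and $0$ if $m<n$. A Bregman function is $b(x,y)=-f(x)-f'(x)(y-x)$ for convex $f$, strictly consistent if $f$ is strictly convex. Consistency of a scoring function $S$ for a functional $\Gamma$: $\mathbb{E}_PS(a,\Phi)\ge\mathbb{E}_PS(\Gamma(P),\Phi)$ for all reports $a$ and distributions $P$ in the class (expectations assumed to exist); strict if equality implies $a=\Gamma(P)$. *)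

(* Defs.v *)
From HB Require Import structures.
From mathcomp Require Import all_boot all_order all_algebra.
From mathcomp Require Import all_classical all_reals all_analysis.
Set Implicit Arguments. Unset Strict Implicit. Unset Printing Implicit Defensive.
Import Order.TTheory GRing.Theory Num.Theory.
Local Open Scope classical_set_scope.
Local Open Scope ring_scope.

Section PPScores.
Context {R : realType} (d n : nat).

(* points of R^d are d-tuples of reals (Borel = product sigma-algebra);
   the space X^n is a subset of n-tuples of points *)
Local Notation pt := (d.-tuple R).
Local Notation T := (n.-tuple pt).

Definition bounded_Rd (X : set pt) : Prop :=
  exists M : R, forall x, X x -> forall i, `|tnth x i| <= M.

Definition powset (X : set pt) : set T := [set t | forall i, X (tnth t i)].

Definition mstar (mu : set T -> \bar R) : set T -> \bar R :=
  fun A => (mu A * ((fine (mu [set: T]))^-1)%:E)%E.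

(* the n-tuple (x_{t_1}, ..., x_{t_n}) of points of the configuration
   s = [:: y_1; ...; y_m] selected by the index tuple t *)
Definition sel (s : seq pt) (t : n.-tuple 'I_(size s)) : T :=
  map_tuple (tnth (in_tuple s)) t.

(* A finite point process on X, given as a random finite configuration
   Phi : Omega -> seq pt (points listed with multiplicity, in some order):
   the number of points is measurable and each listed point is a measurable
   function on the event where it exists. *)
Definition point_process {dO : measure_display} {O : measurableType dO}
  (X : set pt) (Phi : O -> seq pt) : Prop :=
  [/\ forall w x, x \in Phi w -> X x,
      forall k : nat, measurable [set w | size (Phi w) = k] &
      forall (i : nat) (x0 : pt),
        measurable_fun [set w | (i < size (Phi w))%N] (fun w => nth x0 (Phi w) i)].

Definition moment_measure {dO : measure_display} {O : measurableType dO}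
  (P : probability O R) (Phi : O -> seq pt) (A : set T) : \bar R :=
  (\int[P]_w (\sum_(t : n.-tuple 'I_(size (Phi w))) \1_A (sel t))%:E)%E.

Definition factorial_moment_measure {dO : measure_display} {O : measurableType dO}
  (P : probability O R) (Phi : O -> seq pt) (A : set T) : \bar R :=
  (\int[P]_w (\sum_(t : n.-tuple 'I_(size (Phi w)) | uniq t) \1_A (sel t))%:E)%E.

Definition bregman (strict : bool) (b : R -> R -> R) : Prop :=
  exists f f' : R -> R,
  [/\ forall x y, 0 <= x -> 0 <= y -> f x + f' x * (y - x) <= f y,
      strict -> forall x y, 0 <= x -> 0 <= y -> x != y ->
                  f x + f' x * (y - x) < f y &
      forall x y, 0 <= x -> 0 <= y -> b x y = - f x - f' x * (y - x)].

(* (strict) consistency of S : F^n x X^n -> R for the identity on F^n,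
   F^n = probability measures on X^n (normalized finite measures);
   expectations are assumed to exist (integrability). *)
Definition consistent_id (strict : bool) (X : set pt)
  (S : (set T -> \bar R) -> T -> R) : Prop :=
  forall Q Q' : probability T R,
    Q (~` powset X) = 0%E -> Q' (~` powset X) = 0%E ->
    Q.-integrable [set: T] (EFin \o S Q) ->
    Q.-integrable [set: T] (EFin \o S Q') ->
    (\int[Q]_x (S Q x)%:E <= \int[Q]_x (S Q' x)%:E)%E /\
    (strict -> (\int[Q]_x (S Q x)%:E = \int[Q]_x (S Q' x)%:E)%E ->
       forall A, measurable A -> Q' A = Q A).

Definition S1 (X : set pt) (S : (set T -> \bar R) -> T -> R) (b : R -> R -> R)
  (c : R) (mu : set T -> \bar R) (s : seq pt) : R :=
  if s is [::] then c * b (fine (mu (powset X))) 0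
  else \sum_(t : n.-tuple 'I_(size s)) S (mstar mu) (sel t)
       + c * b (fine (mu (powset X))) ((size s) ^ n)%:R.

(* S_2, with m^[n] = m ^_ n (falling factorial, 0 if m < n) *)
Definition S2 (X : set pt) (S : (set T -> \bar R) -> T -> R) (b : R -> R -> R)
  (c : R) (mu : set T -> \bar R) (s : seq pt) : R :=
  if (size s < n)%N then c * b (fine (mu (powset X))) 0
  else \sum_(t : n.-tuple 'I_(size s) | uniq t) S (mstar mu) (sel t)
       + c * b (fine (mu (powset X))) ((size s) ^_ n)%:R.

(* Reports are finite
   nonzero measures on X^n.  "Expectations exist" is read as
   E_P sum_{selected tuples} |S(a^*, x)| < oo for the report a and for the
   true value nu ([Ex a s] is that integrand). *)
Definition consistent_pp (strict : bool) (X : set pt)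
  (Gamma : forall (dO : measure_display) (O : measurableType dO),
             probability O R -> (O -> seq pt) -> set T -> \bar R)
  (Sc : (set T -> \bar R) -> seq pt -> R)
  (Ex : (set T -> \bar R) -> seq pt -> \bar R) : Prop :=
  forall (dO : measure_display) (O : measurableType dO)
         (P : probability O R) (Phi : O -> seq pt),
  point_process X Phi ->
  forall nu : {finite_measure set T -> \bar R},
  (forall A, measurable A -> nu A = Gamma _ _ P Phi A) ->
  forall mu : {finite_measure set T -> \bar R},
  mu (~` powset X) = 0%E -> (0 < mu (powset X))%E ->
  (\int[P]_w Ex mu (Phi w) < +oo)%E ->
  (\int[P]_w Ex nu (Phi w) < +oo)%E ->
  (\int[P]_w (Sc nu (Phi w))%:E <= \int[P]_w (Sc mu (Phi w))%:E)%E /\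
  (strict -> (\int[P]_w (Sc nu (Phi w))%:E = \int[P]_w (Sc mu (Phi w))%:E)%E ->
     forall A, measurable A -> mu A = nu A).

Definition Ex1 (S : (set T -> \bar R) -> T -> R) (mu : set T -> \bar R)
  (s : seq pt) : \bar R :=
  (\sum_(t : n.-tuple 'I_(size s)) `|S (mstar mu) (sel t)|)%:E.
Definition Ex2 (S : (set T -> \bar R) -> T -> R) (mu : set T -> \bar R)
  (s : seq pt) : \bar R :=
  (\sum_(t : n.-tuple 'I_(size s) | uniq t) `|S (mstar mu) (sel t)|)%:E.

End PPScores.

(* Main.v *)
Require Import Defs.
From HB Require Import structures.
From mathcomp Require Import all_boot all_order all_algebra.
From mathcomp Require Import all_classical all_reals all_analysis.
From mathcomp Require Import measurable_realfun finmap ring lra.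
Import Order.TTheory GRing.Theory Num.Theory numFieldNormedType.Exports.
Local Open Scope classical_set_scope.
Local Open Scope ring_scope.
Set Implicit Arguments. Unset Strict Implicit. Unset Printing Implicit Defensive.
Import HBNNSimple.

Lemma cvg_bigsum (R : realType) (I : Type) (r : seq I) (P : pred I)
  (u : I -> nat -> R) (l : I -> R) :
  (forall i, u i k @[k --> \oo] --> l i) ->
  \sum_(i <- r | P i) u i k @[k --> \oo] --> \sum_(i <- r | P i) l i.
Proof.
move=> hu; elim: r => [|i r IH].
  rewrite big_nil; under eq_fun do rewrite big_nil; exact: cvg_cst.
rewrite big_cons; under eq_fun do rewrite big_cons.
case: (P i) => //; exact: cvgD.
Qed.

Lemma my_indic_ge0 (R : realType) (U : Type) (A : set U) (x : U) :
  (0 : R) <= \1_A x.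
Proof. by rewrite indicE ler0n. Qed.

Section PP.
Context {R : realType} (d n : nat).
Local Notation pt := (d.-tuple R).
Local Notation T := (n.-tuple pt).
Context {dO : measure_display} {O : measurableType dO}.
Variables (Phi : O -> seq pt).
Hypothesis msize : forall k, measurable [set w | size (Phi w) = k].
Hypothesis mnth : forall i x0,
  measurable_fun [set w | (i < size (Phi w))%N] (fun w => nth x0 (Phi w) i).

Lemma meas_lt i : measurable [set w | (i < size (Phi w))%N].
Proof.
have -> : [set w | (i < size (Phi w))%N] =
    \bigcup_k [set w | size (Phi w) = (k + i.+1)%N].
  apply/seteqP; split => w /=.
    by move=> h; exists (size (Phi w) - i.+1)%N => //=; rewrite subnK.
  by move=> [k _ ->]; rewrite addnS ltnS leq_addl.
by apply: bigcupT_measurable => k; exact: msize.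
Qed.

Lemma meas_nthT i x0 : measurable_fun setT (fun w => nth x0 (Phi w) i).
Proof.
move=> _ Y mY; rewrite setTI.
have h := @mnth i x0 (meas_lt i) Y mY.
case: (pselect (Y x0)) => Yx0.
  have -> : (fun w => nth x0 (Phi w) i) @^-1` Y =
     ([set w | (i < size (Phi w))%N] `&` (fun w => nth x0 (Phi w) i) @^-1` Y)
     `|` ~` [set w | (i < size (Phi w))%N].
    apply/seteqP; split => w /=.
      by case: (ltnP i (size (Phi w))) => hi Yw; [left|right => //=; rewrite ltnNge hi].
    case=> [[]//|/negP]; rewrite -leqNgt => hi.
    by rewrite nth_default.
  by apply: measurableU => //; apply: measurableC; exact: meas_lt.
have -> : (fun w => nth x0 (Phi w) i) @^-1` Y =
     ([set w | (i < size (Phi w))%N] `&` (fun w => nth x0 (Phi w) i) @^-1` Y).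
  apply/seteqP; split => w /=; last by case.
  case: (ltnP i (size (Phi w))) => hi Yw //.
  by rewrite nth_default in Yw.
exact: h.
Qed.

Lemma meas_tuple x0 k (t : n.-tuple 'I_k) :
  measurable_fun setT (fun w => map_tuple (fun i : 'I_k => nth x0 (Phi w) i) t : T).
Proof.
apply/measurable_fun_tnthP => j.
have -> : (@tnth n pt ^~ j \o (fun w => map_tuple (fun i : 'I_k => nth x0 (Phi w) i) t))
   = (fun w => nth x0 (Phi w) (tnth t j)).
  by apply/funext => w /=; rewrite tnth_map.
exact: meas_nthT.
Qed.

Lemma meas_by_size (h : O -> R) (hk : nat -> O -> R) :
  (forall k, measurable_fun setT (hk k)) ->
  (forall w, h w = hk (size (Phi w)) w) -> measurable_fun setT h.
Proof.
move=> mk hE _ B mB; rewrite setTI.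
have -> : h @^-1` B =
    \bigcup_k ([set w | size (Phi w) = k] `&` hk k @^-1` B).
  apply/seteqP; split => w /=.
    by move=> Bw; exists (size (Phi w)) => //=; split => //; rewrite -hE.
  by move=> [k _ [/= <- ]]; rewrite -hE.
apply: bigcupT_measurable => k; apply: measurableI; first exact: msize.
by rewrite -(setTI (hk k @^-1` B)); exact: mk.
Qed.

Variable p : forall m : nat, pred (n.-tuple 'I_m).

Definition sumsel (F : T -> R) (s : seq pt) : R :=
  \sum_(t : n.-tuple 'I_(size s) | @p (size s) t) F (sel t).

Lemma sumsel_nth F s k x0 : size s = k ->
  sumsel F s = \sum_(t : n.-tuple 'I_k | @p k t)
                 F (map_tuple (fun i : 'I_k => nth x0 s i) t).
Proof.
move=> <-; apply: eq_bigr => t _; congr F.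
apply: eq_from_tnth => j; rewrite !tnth_map /=.
by rewrite (tnth_nth x0).
Qed.

Definition x0 : pt := [tuple (0:R) | _ < d].

Lemma meas_sumsel F : measurable_fun setT F ->
  measurable_fun setT (fun w => sumsel F (Phi w)).
Proof.
move=> mF.
apply: (@meas_by_size _ (fun k w => \sum_(t : n.-tuple 'I_k | @p k t)
                 F (map_tuple (fun i : 'I_k => nth x0 (Phi w) i) t))).
  move=> k.
  under eq_fun do rewrite big_mkcond.
  apply: measurable_sum => t.
  case: (@p k t).
    exact: (measurableT_comp mF (meas_tuple x0 t)).
  exact: measurable_cst.
by move=> w; apply: sumsel_nth.
Qed.

End PP.

Section PP2.
Context {R : realType} (d n : nat).
Local Notation pt := (d.-tuple R).
Local Notation T := (n.-tuple pt).
Context {dO : measure_display} {O : measurableType dO}.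
Variables (Phi : O -> seq pt).
Hypothesis msize : forall k, measurable [set w | size (Phi w) = k].
Hypothesis mnth : forall i x0,
  measurable_fun [set w | (i < size (Phi w))%N] (fun w => nth x0 (Phi w) i).
Variable p : forall m : nat, pred (n.-tuple 'I_m).
Local Notation sumsel := (sumsel p).
Local Notation meas_sumsel := (meas_sumsel msize mnth p).
Variable P : probability O R.
Definition Gam (A : set T) : \bar R := (\int[P]_w (sumsel (\1_A) (Phi w))%:E)%E.

Lemma meas_sumselE F : measurable_fun setT F ->
  measurable_fun [set: O] (EFin \o (fun w => sumsel F (Phi w))).
Proof. by move=> mF; apply/measurable_realfun.measurable_EFinP; exact: meas_sumsel. Qed.

Lemma campbell_sfun (nu : measure T R) :
  (forall A, measurable A -> nu A = Gam A) ->
  forall h : {nnsfun T >-> R},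
  (\int[P]_w (sumsel (fun x => h x) (Phi w))%:E = \int[nu]_x (h x)%:E)%E.
Proof.
move=> hnu h.
pose r := finmap.enum_fset (fset_set (range h)).
have r0 y : y \in r -> 0 <= y.
  move=> yr; have : y \in fset_set (range h) by [].
  rewrite in_fset_set; last exact: fimfunP.
  by rewrite in_setE => -[x _ <-]; exact: fun_ge0.
have hE x : h x = \sum_(y <- r) `|y| * \1_(h @^-1` [set y]) x.
  rewrite [LHS]fimfunE fsbig_finite; last exact: fimfunP.
  by apply: eq_big_seq => y /r0 y0; rewrite ger0_norm.
have mpre y : measurable (h @^-1` [set y]).
  by apply: measurable_funPTI; exact: measurable_set1.
have LHS w : (sumsel (fun x => h x) (Phi w))%:E =
    (\sum_(y <- r) (`|y| * sumsel (\1_(h @^-1` [set y])) (Phi w))%:E)%E.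
  rewrite sumEFin; congr EFin.
  rewrite /sumsel; under eq_bigr do rewrite hE.
  by rewrite exchange_big; apply: eq_bigr => y _; rewrite mulr_sumr.
under eq_integral do rewrite LHS.
rewrite ge0_integral_sum //; last 2 first.
- move=> y; apply/measurable_realfun.measurable_EFinP.
  apply: measurable_realfun.measurable_funM; first exact: measurable_cst.
  apply: meas_sumsel; exact: measurable_realfun.measurable_indic.
- move=> y w _; rewrite lee_fin mulr_ge0 // sumr_ge0 // => t _;
  exact: my_indic_ge0.
under [RHS]eq_integral do rewrite hE -sumEFin.
rewrite [RHS]ge0_integral_sum //; last first.
  move=> y; apply/measurable_realfun.measurable_EFinP.
  apply: measurable_realfun.measurable_funM; first exact: measurable_cst.
  exact: measurable_realfun.measurable_indic.
apply: eq_bigr => y _.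
under eq_integral do rewrite EFinM.
under [RHS]eq_integral do rewrite EFinM.
rewrite ge0_integralZl_EFin //; last 2 first.
- by move=> w _; rewrite lee_fin sumr_ge0 // => t _; exact: my_indic_ge0.
- by apply: meas_sumselE; exact: measurable_realfun.measurable_indic.
rewrite ge0_integralZl_EFin //.
rewrite integral_indic // setIT hnu //.
apply/measurable_realfun.measurable_EFinP; exact: measurable_realfun.measurable_indic.
Qed.

Lemma campbell_ge0 (nu : measure T R) :
  (forall A, measurable A -> nu A = Gam A) ->
  forall g : T -> R, measurable_fun setT g -> (forall x, 0 <= g x) ->
  (\int[P]_w (sumsel g (Phi w))%:E = \int[nu]_x (g x)%:E)%E.
Proof.
move=> hnu g mg g0.
have mg' : measurable_fun [set: T] (EFin \o g).
  by apply/measurable_realfun.measurable_EFinP.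
have g0' : forall x, [set: T] x -> (0 <= (EFin \o g) x)%E.
  by move=> x _; rewrite lee_fin.
pose h := nnsfun_approx measurableT mg'.
have hcvg x : h k x @[k --> \oo] --> g x.
  exact: (fine_cvg (cvg_nnsfun_approx measurableT mg' g0' (I : [set: T] x))).
have hnd x : {homo (fun k => h k x) : a b / (a <= b)%N >-> a <= b}.
  by move=> a b ab; have /lefP := nd_nnsfun_approx measurableT mg' ab; apply.
have -> : (\int[nu]_x (g x)%:E)%E = limn (fun k => \int[nu]_x (h k x)%:E)%E.
  rewrite -monotone_convergence //.
  - apply: eq_integral => x _; apply/esym/cvg_lim => //.
    exact: cvg_nnsfun_approx.
  - by move=> k; apply/measurable_realfun.measurable_EFinP; exact: measurable_funPT.
  - by move=> k x _; rewrite lee_fin; exact: fun_ge0.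
  - by move=> x _ a b ab; rewrite lee_fin; exact: hnd.
have -> : (\int[P]_w (sumsel g (Phi w))%:E)%E =
    limn (fun k => \int[P]_w (sumsel (fun x => h k x) (Phi w))%:E)%E.
  rewrite -monotone_convergence //.
  - apply: eq_integral => w _; apply/esym/cvg_lim => //.
    have hc := cvg_bigsum (r := index_enum (n.-tuple 'I_(size (Phi w))))
      (P := @p (size (Phi w))) (fun t => hcvg (sel t)).
    apply: cvg_EFin; first by apply: nearW.
    exact: hc.
  - move=> k; apply: meas_sumselE; exact: measurable_funPT.
  - move=> k w _; rewrite lee_fin; apply: sumr_ge0 => t _; exact: fun_ge0.
  - move=> w _ a b ab; rewrite lee_fin; apply: ler_sum => t _; exact: hnd.
congr (limn _); apply/funext => k; exact: campbell_sfun.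
Qed.

Lemma posneg (x : R) : Num.max x 0 - Num.max (- x) 0 = x.
Proof.
rewrite /Num.max.
case: (ltP x 0) => h; case: (ltP (- x) 0) => h'.
- by move: h'; rewrite oppr_lt0 => /(lt_trans h); rewrite ltxx.
- by rewrite sub0r opprK.
- by rewrite subr0.
- rewrite oppr_ge0 in h'; have -> : x = 0 by apply/eqP; rewrite eq_le h h'.
  by rewrite oppr0 subr0.
Qed.

Lemma campbell (nu : measure T R) :
  (forall A, measurable A -> nu A = Gam A) ->
  forall g : T -> R, measurable_fun setT g ->
  (\int[P]_w (sumsel (fun x => `|g x|) (Phi w))%:E < +oo)%E ->
  [/\ P.-integrable setT (fun w => (sumsel g (Phi w))%:E),
      nu.-integrable setT (EFin \o g) &
      (\int[P]_w (sumsel g (Phi w))%:E = \int[nu]_x (g x)%:E)%E].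
Proof.
move=> hnu g mg hfin.
have mabs : measurable_fun setT (fun x => `|g x|).
  exact: (measurableT_comp (@measurable_realfun.normr_measurable R setT) mg).
have iabs : P.-integrable setT (fun w => (sumsel (fun x => `|g x|) (Phi w))%:E).
  apply/integrableP; split; first exact: meas_sumselE.
  under eq_integral do rewrite abse_EFin ger0_norm ?sumr_ge0 //.
  exact: hfin.
have inu_abs : nu.-integrable setT (EFin \o (fun x => `|g x|)).
  apply/integrableP; split; first by apply/measurable_realfun.measurable_EFinP.
  rewrite (eq_integral (fun x => (`|g x|)%:E)); last first.
    by move=> x _ /=; rewrite normr_id.
  by rewrite -(campbell_ge0 hnu mabs (fun x => normr_ge0 _)).
have inu : nu.-integrable setT (EFin \o g).
  apply: le_integrable inu_abs => //.
    by apply/measurable_realfun.measurable_EFinP.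
  by move=> x _ /=; rewrite normr_id.
pose gp := fun x => Num.max (g x) 0.
pose gn := fun x => Num.max (- g x) 0.
have mgp : measurable_fun setT gp.
  exact: (measurable_realfun.measurable_maxr mg (measurable_cst (0:R))).
have mgn : measurable_fun setT gn.
  exact: (measurable_realfun.measurable_maxr
    (measurableT_comp (@measurable_realfun.oppr_measurable R setT) mg)
    (measurable_cst (0:R))).
have gp0 x : 0 <= gp x by rewrite /gp /Num.max; case: ltP => [_|h] //.
have gn0 x : 0 <= gn x by rewrite /gn /Num.max; case: ltP => [_|h] //.
have gpa x : gp x <= `|g x|.
  by rewrite /gp /Num.max; case: ltP => _; [exact: normr_ge0|exact: ler_norm].
have gna x : gn x <= `|g x|.
  rewrite /gn /Num.max; case: ltP => _; first exact: normr_ge0.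
  by rewrite -normrN; exact: ler_norm.
have s0 : forall (F : T -> R), (forall x, 0 <= F x) -> forall s, 0 <= sumsel F s.
  by move=> F F0 s; apply: sumr_ge0 => t _.
have ip : forall f : T -> R, measurable_fun setT f -> (forall x, 0 <= f x <= `|g x|) ->
    P.-integrable setT (fun w => (sumsel f (Phi w))%:E) /\
    nu.-integrable setT (EFin \o f).
  move=> f mf hf.
  have f0 x : 0 <= f x by case/andP: (hf x).
  have fg x : f x <= `|g x| by case/andP: (hf x).
  split.
    apply: le_integrable iabs => //; first exact: meas_sumselE.
    move=> w _; rewrite !abse_EFin lee_fin.
    rewrite (ger0_norm (s0 _ f0 _)) (ger0_norm (s0 _ (fun x => normr_ge0 (g x)) _)).
    by apply: ler_sum => t _.
  apply: le_integrable inu_abs => //; first by apply/measurable_realfun.measurable_EFinP.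
  move=> x _ /=; rewrite lee_fin normr_id.
  by rewrite ger0_norm.
have [ipP ipnu] := ip gp mgp (fun x => introT andP (conj (gp0 x) (gpa x))).
have [inP innu] := ip gn mgn (fun x => introT andP (conj (gn0 x) (gna x))).
split => //.
  apply: le_integrable iabs => //; first exact: meas_sumselE.
  move=> w _; rewrite !abse_EFin lee_fin.
  rewrite (ger0_norm (s0 _ (fun x => normr_ge0 (g x)) _)).
  exact: ler_norm_sum.
have -> : (\int[P]_w (sumsel g (Phi w))%:E =
    \int[P]_w ((sumsel gp (Phi w))%:E - (sumsel gn (Phi w))%:E))%E.
  apply: eq_integral => w _; rewrite -EFinB; congr EFin.
  by rewrite /sumsel -sumrB; apply: eq_bigr => t _; rewrite posneg.
rewrite integralB_EFin // (campbell_ge0 hnu mgp gp0) (campbell_ge0 hnu mgn gn0).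
rewrite -integralB_EFin //; apply: eq_integral => x _.
by rewrite -EFinB posneg.
Qed.

End PP2.

Section Scale.
Context {R : realType} {dT : measure_display} {T : measurableType dT}.

Lemma int_scale (mu1 mu2 : measure T R) (k : R) : 0 < k ->
  (forall A, measurable A -> mu1 A = (k%:E * mu2 A)%E) ->
  forall g : T -> R, mu1.-integrable setT (EFin \o g) ->
  mu2.-integrable setT (EFin \o g) /\
  (\int[mu1]_x (g x)%:E = k%:E * \int[mu2]_x (g x)%:E)%E.
Proof.
move=> k0 h g ig.
have mg : measurable_fun setT (EFin \o g) := measurable_int _ ig.
pose kk : {nonneg R} := NngNum (ltW k0).
have e1 (F : T -> \bar R) : measurable_fun setT F -> (forall x, 0 <= F x)%E ->
    (\int[mu1]_x F x = k%:E * \int[mu2]_x F x)%E.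
  move=> mF F0.
  rewrite (@eq_measure_integral _ _ _ setT (mscale kk mu2)); last first.
    by move=> A mA _; rewrite h.
  by rewrite ge0_integral_mscale.
have i2 : mu2.-integrable setT (EFin \o g).
  apply/integrableP; split => //.
  have /integrableP[_] := ig.
  rewrite e1 //; last exact: measurableT_comp mg.
  move=> H; rewrite ltNge leye_eq; apply/negP => /eqP E; move: H.
  by rewrite E gt0_muley ?lte_fin // ltxx.
split => //.
rewrite integralE [in RHS]integralE.
rewrite (e1 _ (measurable_funepos mg)) // (e1 _ (measurable_funeneg mg)) //.
have hp := integrable_pos_fin_num measurableT i2.
have hn := integrable_neg_fin_num measurableT i2.
rewrite -(fineK hp) -(fineK hn) -!EFinM -!EFinB; congr EFin.
by rewrite mulrBr.
Qed.

End Scale.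

Lemma mT_eq {R : realType} {dT : measure_display} {T : measurableType dT}
  (m : measure T R) (A : set T) :
  measurable A -> m (~` A) = 0%E -> m setT = m A.
Proof.
move=> mA h.
rewrite -(setUv A) (measureU m mA (measurableC mA) (setICr A)).
by rewrite -[RHS]adde0; congr (_ + _)%E.
Qed.

Lemma int_split {R : realType} {dO : measure_display} {O : measurableType dO}
  (P : probability O R) (A K : O -> R) (N u v : R) :
  P.-integrable setT (EFin \o A) -> P.-integrable setT (EFin \o K) ->
  (\int[P]_w (K w)%:E = N%:E)%E ->
  (\int[P]_w (A w + (u + v * K w))%:E = \int[P]_w (A w)%:E + (u + v * N)%:E)%E.
Proof.
move=> iA iK hK.
have iv : P.-integrable setT (EFin \o (fun w => v * K w)).
  have h1 := integrableZl measurableT v iK.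
  by apply: (eq_integrable _ _ _ _ h1) => // w _; rewrite /= EFinM.
have iu : P.-integrable setT (EFin \o (fun w => u + v * K w)).
  have h1 := integrableD measurableT (finite_measure_integrable_cst P u measurableT) iv.
  by apply: (eq_integrable _ _ _ _ h1) => // w _; rewrite /= EFinD.
rewrite (eq_integral (fun w => (EFin \o A) w + (EFin \o (fun w => u + v * K w)) w)); last first.
  by move=> w _; rewrite /= EFinD.
rewrite integralD_EFin //; congr (_ + _)%E.
rewrite (eq_integral (fun w => (EFin \o cst u) w + (EFin \o (fun w => v * K w)) w)); last first.
  by move=> w _; rewrite /= EFinD.
rewrite integralD_EFin //; last exact: finite_measure_integrable_cst.
rewrite (eq_integral (fun w => cst u%:E w)) // integral_cst //.
have -> : (u%:E * P [set: O])%E = u%:E.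
  by rewrite -[RHS]mule1; congr (_ * _)%E; exact: probability_setT.
rewrite (eq_integral (fun w => v%:E * (K w)%:E)%E); last by move=> w _; rewrite /= EFinM.
by rewrite integralZl // hK -EFinM -EFinD.
Qed.

Section Main.
Context {R : realType} (d n : nat).
Local Notation pt := (d.-tuple R).
Local Notation T := (n.-tuple pt).
Variables (X : set pt) (S : (set T -> \bar R) -> T -> R) (b : R -> R -> R)
  (c : R) (strict : bool).
Hypothesis n0 : (0 < n)%N.
Hypothesis mX : measurable X.
Hypothesis mS : forall Q, measurable_fun [set: T] (S Q).
Hypothesis hS : consistent_id strict X S.
Hypothesis hb : bregman strict b.
Hypothesis c0 : 0 < c.

Lemma powset_meas : measurable (@powset R d n X).
Proof.
have -> : @powset R d n X =
    \bigcap_k [set t : T | forall hk : (k < n)%N, X (tnth t (Ordinal hk))].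
  apply/seteqP; split => t /=.
    by move=> h k _ hk; exact: h.
  move=> h i; have := h i I (ltn_ord i).
  by rewrite (_ : Ordinal _ = i) //; apply: val_inj.
apply: bigcapT_measurable => k.
have [hk|hk] : (k < n)%N \/ (n <= k)%N by case: ltnP; [left|right].
  have -> : [set t : T | forall hk0 : (k < n)%N, X (tnth t (Ordinal hk0))] =
      (fun t : T => tnth t (Ordinal hk)) @^-1` X.
    apply/seteqP; split => t /=; first exact.
    by move=> h hk0; rewrite (_ : Ordinal hk0 = Ordinal hk) //; apply: val_inj.
  by rewrite -[_ @^-1` _]setTI; apply: measurable_tnth.
have -> : [set t : T | forall hk0 : (k < n)%N, X (tnth t (Ordinal hk0))] = setT.
  by apply/seteqP; split => t //= _ hk0; exfalso; move: hk0; rewrite ltnNge hk.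
exact: measurableT.
Qed.

Lemma norm_prob (m : {finite_measure set T -> \bar R}) (P0 : probability T R) :
  0 < fine (m setT) ->
  (mnormalize m P0 : set T -> \bar R) = mstar m /\
  forall A, measurable A -> m A = ((fine (m setT))%:E * mnormalize m P0 A)%E.
Proof.
move=> m0.
have mfin : m setT \is a fin_num by apply: fin_num_measure.
have E : (mnormalize m P0 : set T -> \bar R) = mstar m.
  apply/funext => A; rewrite /mnormalize /mstar.
  have -> : (m setT == 0%E) || (m setT == +oo%E) = false.
    apply/negbTE; rewrite negb_or; apply/andP; split.
      by apply/eqP => h; move: m0; rewrite h ltxx.
    by apply/eqP => h; move: mfin; rewrite h.
  by [].
split => // A mA; rewrite E /mstar.
have Afin : m A \is a fin_num by apply: fin_num_measure.
rewrite -(fineK Afin) -!EFinM; congr EFin.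
by rewrite mulrCA mulfV ?mulr1 // gt_eqF.
Qed.

Variable p : forall m : nat, pred (n.-tuple 'I_m).

Definition Sc (mu : set T -> \bar R) (s : seq pt) : R :=
  sumsel p (S (mstar mu)) s +
  c * b (fine (mu (@powset R d n X))) (sumsel p (fun _ => 1) s).

Theorem main_gen : consistent_pp strict X
  (fun dO O P Phi => @Gam R d n dO O Phi p P) Sc
  (fun mu s => (sumsel p (fun x => `|S (mstar mu) x|) s)%:E).
Proof.
move=> dO O P Phi [pX msize mnth] nu hnu mu mu0 mupos Emu Enu.
have mpX := powset_meas.
have sel_in (w : O) (t : n.-tuple 'I_(size (Phi w))) : @powset R d n X (sel t).
  by move=> i; rewrite /sel tnth_map; apply: (pX w); exact: mem_tnth.
have nu0 : nu (~` @powset R d n X) = 0%E.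
  rewrite hnu; last exact: measurableC.
  rewrite /Gam (eq_integral (cst 0%E)); first exact: integral0.
  move=> w _; rewrite /sumsel big1 // => t _.
  by rewrite indicE memNset // => /(_ (sel_in w t)).
have nuT : nu setT = nu (@powset R d n X) := mT_eq mpX nu0.
have muT : mu setT = mu (@powset R d n X) := mT_eq mpX mu0.
have nufin A : measurable A -> nu A \is a fin_num by move=> mA; apply: fin_num_measure.
have mufin A : measurable A -> mu A \is a fin_num by move=> mA; apply: fin_num_measure.
pose N := fine (nu setT).
have nuN : nu setT = N%:E by rewrite fineK // nufin.
have N0 : 0 <= N by apply: fine_ge0.
pose M := fine (mu setT).
have muM : mu setT = M%:E by rewrite fineK // mufin.
have M0 : 0 < M by rewrite -lte_fin -muM muT.
have [f [f' [hconv hstr hbE]]] := hb.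
pose K w := sumsel p (fun _ => 1) (Phi w).
have K0 w : 0 <= K w by apply: sumr_ge0 => t _.
have mK : measurable_fun setT K := meas_sumsel msize mnth p (measurable_cst _).
have EK : (\int[P]_w (K w)%:E = N%:E)%E.
  rewrite -nuN hnu //; apply: eq_integral => w _.
  by rewrite indicT.
have iK : P.-integrable setT (EFin \o K).
  apply/integrableP; split; first by apply/measurable_EFinP.
  rewrite (eq_integral (fun w => (K w)%:E)); last first.
    by move=> w _ /=; rewrite ger0_norm.
  by rewrite EK ltry.
have ES (m : set T -> \bar R) (a : R) : 0 <= a -> fine (m (@powset R d n X)) = a ->
    P.-integrable setT (EFin \o (fun w => sumsel p (S (mstar m)) (Phi w))) ->
    (\int[P]_w (Sc m (Phi w))%:E =
     \int[P]_w (sumsel p (S (mstar m)) (Phi w))%:E +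
     (c * (- f a - f' a * (N - a)))%:E)%E.
  move=> a0 ha iA.
  rewrite (eq_integral (fun w => (sumsel p (S (mstar m)) (Phi w) +
     ((c * (- f a + f' a * a)) + (- (c * f' a)) * K w))%:E)); last first.
    move=> w _; rewrite /Sc ha hbE //; last exact: K0.
    by congr (_%:E); rewrite /K; ring.
  by rewrite (int_split _ _ iA iK EK); congr (_ + _)%E; congr (_%:E); ring.
have [iPm inum Em] := campbell msize mnth hnu (mS (mstar mu)) Emu.
have [iPn inun En] := campbell msize mnth hnu (mS (mstar nu)) Enu.
have fmu : fine (mu (@powset R d n X)) = M by rewrite /M muT.
have fnu : fine (nu (@powset R d n X)) = N by rewrite /N nuT.
rewrite (ES nu N N0 fnu iPn) (ES mu M (ltW M0) fmu iPm) En Em.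
have finN := integrable_fin_num measurableT inun.
have finM := integrable_fin_num measurableT inum.
set aN := (\int[nu]_x (S (mstar nu) x)%:E)%E in finN *.
set aM := (\int[nu]_x (S (mstar mu) x)%:E)%E in finM *.
have hB : c * (- f N - f' N * (N - N)) <= c * (- f M - f' M * (N - M)).
  have h := hconv M N (ltW M0) N0.
  have h2 : 0 <= c * (f N - (f M + f' M * (N - M))).
    by apply: mulr_ge0; [exact: ltW|rewrite subr_ge0].
  lra.
have key : fine aN <= fine aM /\
    (strict -> fine aN = fine aM -> 0 < N -> M = N ->
       forall A, measurable A -> mu A = nu A).
  have [Nz|Npos] : N = 0 \/ 0 < N.
    by move: N0; rewrite le_eqVlt => /orP[/eqP <-|->]; [left|right].
    have nuA A : measurable A -> nu A = 0%E.
      move=> mA; apply/eqP; rewrite eq_le measure_ge0 andbT.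
      rewrite -[X in (_ <= X)%E](_ : nu setT = 0%E); last by rewrite nuN Nz.
      by apply: le_measure; [exact: mem_set|exact: (mem_set measurableT)|exact: subsetT].
    have z g : (\int[nu]_x (g x)%:E = 0)%E.
      rewrite (@eq_measure_integral _ _ _ setT mzero); first exact: integral_measure_zero.
      by move=> A mA _; exact: nuA mA.
    by rewrite /aN /aM !z; split => // _ _; rewrite Nz ltxx.
  pose P0 : probability T R := \d_([tuple [tuple (0:R) | _ < d] | _ < n]).
  have [QnE Qnsc] := norm_prob (m:=nu) P0 Npos.
  have [QmE Qmsc] := norm_prob (m:=mu) P0 (M0 : 0 < fine (mu setT)).
  have [iQn eN] := int_scale Npos Qnsc inun.
  have [iQm eM] := int_scale Npos Qnsc inum.
  rewrite -QnE in iQn.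
  rewrite -QmE in iQm.
  have Qn0 : mnormalize nu P0 (~` @powset R d n X) = 0%E by rewrite QnE /mstar nu0 mul0e.
  have Qm0 : mnormalize mu P0 (~` @powset R d n X) = 0%E by rewrite QmE /mstar mu0 mul0e.
  have H := hS Qn0 Qm0 iQn iQm.
  have hqN := integrable_fin_num measurableT iQn.
  have hqM := integrable_fin_num measurableT iQm.
  set qN := (\int[mnormalize nu P0]_x (S (mnormalize nu P0) x)%:E)%E in hqN.
  set qM := (\int[mnormalize nu P0]_x (S (mnormalize mu P0) x)%:E)%E in hqM.
  have eN' : aN = (N%:E * qN)%E.
    by rewrite /qN (_ : S (mnormalize nu P0) = S (mstar nu)); [exact: eN|rewrite QnE].
  have eM' : aM = (N%:E * qM)%E.
    by rewrite /qM (_ : S (mnormalize mu P0) = S (mstar mu)); [exact: eM|rewrite QmE].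
  have H1 : fine qN <= fine qM.
    by rewrite -lee_fin !fineK //; exact: H.1.
  have rN : fine aN = N * fine qN by rewrite eN' -(fineK hqN) -EFinM.
  have rM : fine aM = N * fine qM by rewrite eM' -(fineK hqM) -EFinM.
  split; first by rewrite rN rM; nra.
  move=> hst hNM _ MN A mA.
  have qq : fine qN = fine qM.
    have hN : N != 0 by rewrite gt_eqF.
    by apply: (mulfI hN); rewrite -rN -rM.
  have Eq' : qN = qM by rewrite -(fineK hqN) -(fineK hqM) qq.
  have HA : mnormalize mu P0 A = mnormalize nu P0 A := H.2 hst Eq' A mA.
  rewrite (Qmsc A mA) (Qnsc A mA) HA.
  by congr (_ * _)%E; congr EFin; exact: MN.
have [k1 k2] := key.
rewrite -(fineK finN) -(fineK finM) -!EFinD lee_fin.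
split; first lra.
move=> hst [] heq.
have eqa : fine aN = fine aM by lra.
have eqb : c * (- f N - f' N * (N - N)) = c * (- f M - f' M * (N - M)) by lra.
have MN : M = N.
  apply/eqP; apply/negPn/negP => hMN.
  have h1 := hstr hst M N (ltW M0) N0 hMN.
  have hc : c != 0 by rewrite gt_eqF.
  have h2 := mulfI hc eqb.
  rewrite subrr mulr0 subr0 in h2.
  have h3 : f N = f M + f' M * (N - M).
    by rewrite -[f N]opprK h2 opprB opprK addrC.
  by move: h1; rewrite h3 ltxx.
have Npos : 0 < N by rewrite -MN.
exact: k2 hst eqa Npos MN.
Qed.

End Main.
Lemma sum_uniq_small {R : realType} n m (F : n.-tuple 'I_m -> R) :
  (m < n)%N -> \sum_(t : n.-tuple 'I_m | uniq t) F t = 0.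
Proof.
move=> mn; apply: big1 => t ut; exfalso.
have sub : {subset (t : seq _) <= enum 'I_m} by move=> x _; rewrite mem_enum.
have := uniq_leq_size ut sub; rewrite size_tuple size_enum_ord => h.
by move: mn; rewrite ltnNge h.
Qed.

Lemma sum_I0 {R : realType} n (F : n.-tuple 'I_0 -> R) :
  (0 < n)%N -> \sum_(t : n.-tuple 'I_0) F t = 0.
Proof.
move=> n0; apply: big1 => t _; case: (tnth t (Ordinal n0)) => m hm.
by exfalso; rewrite ltn0 in hm.
Qed.

Lemma c1 {R : realType} n m : \sum_(t : n.-tuple 'I_m | uniq t) (1:R) = (m ^_ n)%:R.
Proof.
rewrite sumr_const.
have -> : #|(fun i : n.-tuple 'I_m => uniq i)| =
    #|[set t : n.-tuple 'I_m | all predT t & uniq t]|.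
  by apply: eq_card => t; rewrite inE all_predT.
by rewrite card_uniq_tuples card_ord.
Qed.

Lemma c2 {R : realType} n m : \sum_(t : n.-tuple 'I_m) (1:R) = (m ^ n)%:R.
Proof. by rewrite sumr_const card_tuple card_ord. Qed.

Theorem proposition3p10 (R : realType) (d n : nat) (X : set (d.-tuple R))
  (S : (set (n.-tuple (d.-tuple R)) -> \bar R) -> n.-tuple (d.-tuple R) -> R)
  (b : R -> R -> R) (c : R) (strict : bool) :
  (0 < n)%N -> measurable X -> bounded_Rd X ->
  (forall Q, measurable_fun [set: n.-tuple (d.-tuple R)] (S Q)) ->
  consistent_id strict X S -> bregman strict b -> 0 < c ->
  consistent_pp strict X (@moment_measure R d n) (S1 X S b c) (Ex1 S) /\
  consistent_pp strict X (@factorial_moment_measure R d n) (S2 X S b c) (Ex2 S).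
Proof.
move=> n0 mX _ mS hS hb c0; split.
- have -> : S1 X S b c = Sc X S b c (fun _ _ => true).
    apply/funext => mu; apply/funext => s.
    case: s => [|y s] /=.
      by rewrite /Sc /sumsel /= !sum_I0 // add0r.
    rewrite /Sc /sumsel /=; congr (_ + c * b _ _).
    by rewrite c2.
  exact: (main_gen mX mS hS hb c0 (p := fun _ _ => true)).
- have -> : S2 X S b c = Sc X S b c (fun _ t => uniq t).
    apply/funext => mu; apply/funext => s.
    rewrite /S2 /Sc /sumsel; case: ltnP => h.
      by rewrite !sum_uniq_small // add0r.
    by congr (_ + c * b _ _); rewrite c1.
  exact: (main_gen mX mS hS hb c0 (p := fun _ t => uniq t)).
Qed.
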